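(* Let $X$ be a $T_0$ space. For every irreducible subset $F$ of $X$ and every $x\in F^\delta$, there exists a net $(x_i)_{i\in I}$ with all $x_i\in F$ that $GSI_2$-converges to $x$.
   Context: For a $T_0$ space $X$, the specialization order is $x\le y$ iff $x\in \mathrm{cl}\{y\}$; $\uparrow A=\{x: a\le x\text{ for some } a\in A\}$, $\uparrow x=\uparrow\{x\}$; $A^\uparrow$, $A^\downarrow$ are the sets of upper and lower bounds of $A$, and $A^\delta=(A^\uparrow)^\downarrow$. A nonempty subset $A$ of a space is irreducible if whenever $A\subseteq F_1\cup F_2$ with $F_1,F_2$ closed, $A\subseteq F_1$ or $A\subseteq F_2$. $X^{(<\omega)}$ is the set of nonempty finite subsets of $X$. $P_S(X)$ is the set of nonempty compact saturated (upper) subsets of $X$ with the upper Vietoris topology, basis $\{\square U: U\text{ open}\}$, $\square U=\{Q: Q\subseteq U\}$. A net is eventually in $U$ if from some index on all its terms lie in $U$. A net $(x_i)_{i\in I}$ $GSI_2$-converges to $x$ if there exists $\mathcal F\subseteq X^{(<\omega)}$ with $\{\uparrow G: G\in\mathcal F\}$ irreducible in $P_S(X)$ such that (i) for every open $U$, if $\uparrow G\subseteq U$ for some $G\in\mathcal F$ then $x_i\in U$ eventually, and (ii) $\bigcap_{G\in\mathcal F}\uparrow G\subseteq\uparrow x$. *)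

(* Defs.v *)
From HB Require Import structures.
From mathcomp Require Import all_boot all_order.
From mathcomp Require Import all_classical all_reals all_analysis.
Set Implicit Arguments. Unset Strict Implicit. Unset Printing Implicit Defensive.
Local Open Scope classical_set_scope.

Section GSI2.
Variable X : topologicalType.

Definition spec_le (x y : X) : Prop := closure [set y] x.

Definition upset (A : set X) : set X := [set x | exists2 a, A a & spec_le a x].

Definition upper_bounds (A : set X) : set X := [set u | forall a, A a -> spec_le a u].
Definition lower_bounds (A : set X) : set X := [set l | forall a, A a -> spec_le l a].
Definition delta (A : set X) : set X := lower_bounds (upper_bounds A).

Definition irreducible (A : set X) : Prop :=
  A !=set0 /\
  forall F1 F2 : set X, closed F1 -> closed F2 -> A `<=` F1 `|` F2 ->
    A `<=` F1 \/ A `<=` F2.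

Definition saturated (Q : set X) : Prop := upset Q `<=` Q.
Definition PS : set (set X) := [set Q | Q !=set0 /\ compact Q /\ saturated Q].

Definition box (U : set X) : set (set X) := [set Q | PS Q /\ Q `<=` U].

(* open sets of the upper Vietoris topology on P_S(X) (generated by the
   basis of the box U, U open) *)
Definition uV_open (O : set (set X)) : Prop :=
  O `<=` PS /\ forall Q, O Q -> exists U, [/\ open U, Q `<=` U & box U `<=` O].

Definition uV_closed (C : set (set X)) : Prop :=
  C `<=` PS /\ uV_open (PS `\` C).

Definition uV_irreducible (A : set (set X)) : Prop :=
  A `<=` PS /\ A !=set0 /\
  forall C1 C2, uV_closed C1 -> uV_closed C2 -> A `<=` C1 `|` C2 ->
    A `<=` C1 \/ A `<=` C2.

Definition directed_rel (I : Type) (le : I -> I -> Prop) : Prop :=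
  [/\ inhabited I, (forall i, le i i),
      (forall i j k, le i j -> le j k -> le i k) &
      (forall i j, exists k, le i k /\ le j k)].

Definition eventually_in (I : Type) (le : I -> I -> Prop) (xn : I -> X)
  (U : set X) : Prop :=
  exists i0, forall i, le i0 i -> U (xn i).

Definition GSI2_converges (I : Type) (le : I -> I -> Prop) (xn : I -> X)
  (x : X) : Prop :=
  exists FF : set (set X),
    [/\ (forall G, FF G -> G !=set0 /\ finite_set G),
        uV_irreducible [set upset G | G in FF],
        (forall U, open U -> (exists2 G, FF G & upset G `<=` U) ->
           eventually_in le xn U) &
        \bigcap_(G in FF) upset G `<=` upset [set x]].

End GSI2.

(* Main.v *)
Require Import Defs.
From mathcomp Require Import all_boot all_order.
From mathcomp Require Import all_classical all_reals all_analysis.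
From Stdlib Require List.
Local Open Scope classical_set_scope.

Section Aux.
Variable X : topologicalType.

Lemma open_up (U : set X) a b : open U -> U a -> spec_le a b -> U b.
Proof.
move=> oU Ua ab.
have [y [/= -> Ub]] := ab U (open_nbhs_nbhs (conj oU Ua)).
exact: Ub.
Qed.
Arguments open_up [U a b].

Lemma spec_refl (a : X) : spec_le a a.
Proof. move=> B nB; exact: (subset_closure (A := [set a]) (erefl a) nB). Qed.

Lemma spec_trans (a b c : X) : spec_le a b -> spec_le b c -> spec_le a c.
Proof.
move=> ab bc B; rewrite nbhsE => -[U [oU Ua] UB].
have Ub := open_up oU Ua ab.
have Uc := open_up oU Ub bc.
by exists c; split => //; apply: UB.
Qed.

Lemma up1_PS (a : X) : PS (upset [set a]).
Proof.
split; first by exists a; exists a => //; apply: spec_refl.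
split.
  move=> G PG Gu; exists a; split; first by exists a => //; apply: spec_refl.
  move=> A B GA; rewrite nbhsE => -[U [oU Ua] UB].
  have GI := filterI GA Gu.
  have [y [Ay [a' /= -> ay]]] : exists y, (A `&` upset [set a]) y.
    apply: contrapT => H; apply: (filter_not_empty G).
    have E : A `&` upset [set a] = set0.
      by apply/seteqP; split=> // z Hz; apply: H; exists z.
    by rewrite -E; apply: GI; apply: PG.
  by exists y; split => //; apply: UB; apply: open_up oU Ua ay.
move=> z [y [a' /= -> ay] yz]; exists a => //; exact: spec_trans ay yz.
Qed.

Variable F : set X.
Hypothesis irrF : irreducible F.

Lemma meet2 (U V : set X) : open U -> open V -> F `&` U !=set0 -> F `&` V !=set0 ->
  F `&` (U `&` V) !=set0.
Proof.
move=> oU oV [a [Fa Ua]] [b [Fb Vb]].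
apply: contrapT => H.
have sub : F `<=` ~` U `|` ~` V.
  move=> z Fz; apply: contrapT => /not_orP [/contrapT Uz /contrapT Vz].
  by apply: H; exists z.
case: (irrF.2 _ _ (open_closedC oU) (open_closedC oV) sub) => S.
  exact: (S a Fa Ua).
exact: (S b Fb Vb).
Qed.


Arguments meet2 [U V].

Definition cond (U : set X) := open U /\ F `&` U !=set0.

Fixpoint W (s : seq (set X)) : set X :=
  match s with
  | [::] => setT
  | U :: s' => (if pselect (cond U) then U else setT) `&` W s'
  end.

Lemma Wprop s : open (W s) /\ F `&` W s !=set0.
Proof.
elim: s => [|U s [oW mW]] /=.
  split; first exact: openT.
  have [a Fa] := irrF.1; by exists a.
destruct (pselect (cond U)) as [[oU mU]|nc].
  split; first exact: openI.
  have [y [Fy [Uy Wy]]] := meet2 oU oW mU mW.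
  by exists y; split => //; split.
by rewrite setTI.
Qed.

Lemma Wsub s U : List.In U s -> cond U -> W s `<=` U.
Proof.
elim: s => [//|V s IH] /= [E|iU] cU z [Hz Wz].
  subst V; by move: Hz; destruct (pselect (cond U)).
exact: IH.
Qed.

End Aux.
Arguments W {X} F s.
Arguments Wprop {X F} irrF s.
Arguments Wsub {X F} s U.
Arguments meet2 {X F} irrF [U V].
Arguments up1_PS {X} a.
Arguments spec_refl {X} a.
Arguments spec_trans {X} [a b c].
Arguments open_up {X} [U a b].
Arguments cond {X} F U.

Theorem lemma3p6 (X : topologicalType) :
  kolmogorov_space X ->
  forall (F : set X) (x : X), irreducible F -> delta F x ->
  exists (I : Type) (le : I -> I -> Prop) (xn : I -> X),
    [/\ directed_rel le, (forall i, F (xn i)) & GSI2_converges le xn x].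
Proof.
move=> _ F x irrF dx.
exists (seq (set X)), (fun i j => forall U, List.In U i -> List.In U j),
  (fun s => xget x (F `&` W F s)).
split.
- split.
  + exact: (inhabits [::]).
  + by [].
  + by move=> i j k ij jk U /ij /jk.
  + move=> i j; exists (i ++ j); split=> U H; apply: List.in_or_app; by [left|right].
- move=> s; have [_ m] := Wprop irrF s.
  by have [] := xgetPex x m.
- exists [set [set a] | a in F]; split.
  + move=> G [a Fa <-]; split; [by exists a|exact: finite_set1].
  + split; first by move=> Q [G [a Fa <-] <-]; exact: up1_PS.
    split; first by have [a Fa] := irrF.1; exists (upset [set a]); exists [set a] => //; exists a.
    move=> C1 C2 [_ [_ o1]] [_ [_ o2]] sub.
    apply: contrapT => /not_orP [n1 n2].
    have [Q1 [[G1 [a1 Fa1 <-] <-] nC1]] : exists Q, [set upset G | G in [set [set a] | a in F]] Q /\ ~ C1 Q.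
      by apply: contrapT => H; apply: n1 => Q AQ; apply: contrapT => nQ; apply: H; exists Q.
    have [Q2 [[G2 [a2 Fa2 <-] <-] nC2]] : exists Q, [set upset G | G in [set [set a] | a in F]] Q /\ ~ C2 Q.
      by apply: contrapT => H; apply: n2 => Q AQ; apply: contrapT => nQ; apply: H; exists Q.
    have [U1 [oU1 sU1 bU1]] := o1 _ (conj (up1_PS a1) nC1).
    have [U2 [oU2 sU2 bU2]] := o2 _ (conj (up1_PS a2) nC2).
    have U1a : U1 a1 by apply: sU1; exists a1 => //; apply: spec_refl.
    have U2a : U2 a2 by apply: sU2; exists a2 => //; apply: spec_refl.
    have [y [Fy [U1y U2y]]] := meet2 irrF oU1 oU2 (ex_intro _ a1 (conj Fa1 U1a))
       (ex_intro _ a2 (conj Fa2 U2a)).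
    have Ay : [set upset G | G in [set [set a] | a in F]] (upset [set y]).
      by exists [set y] => //; exists y.
    have s1 : upset [set y] `<=` U1 by move=> z [y' /= -> yz]; exact: open_up oU1 U1y yz.
    have s2 : upset [set y] `<=` U2 by move=> z [y' /= -> yz]; exact: open_up oU2 U2y yz.
    have [_ h1] := bU1 _ (conj (up1_PS y) s1).
    have [_ h2] := bU2 _ (conj (up1_PS y) s2).
    by case: (sub _ Ay).
  + move=> U oU [G [a Fa <-] sG].
    have Ua : U a by apply: sG; exists a => //; apply: spec_refl.
    have cU : cond F U by split => //; exists a.
    exists [:: U] => i Hi.
    have [_ m] := Wprop irrF i.
    have [_ Wi] := xgetPex x m.
    have HU : List.In U i by apply: Hi; left.
    have h := Wsub i U HU cU.
    exact: h _ Wi.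
  + move=> z Hz; exists x => //.
    apply: dx => a Fa.
    have [a' /= -> az] := Hz [set a] (ex_intro2 _ _ a Fa erefl).
    exact: az.
Qed.
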